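(* Let $\mathbb{K}$ be a field with $1+1\neq0$. Any two non-zero symmetric $2\times2$ matrices $P,Q$ over $\mathbb{K}$ with the same determinant are geometrically equivalent over $\mathbb{K}$, i.e. there is $A\in\mathrm{GL}_2(\mathbb{K})$ with $P=A^tQA/|A|$.
   Context: $|A|$ denotes the determinant of $A$ and $\mathrm{GL}_2(\mathbb{K})$ the group of invertible $2\times2$ matrices over $\mathbb{K}$. *)

(* Defs.v *)
From HB Require Import structures.
From mathcomp Require Import all_boot all_order all_algebra.
Set Implicit Arguments. Unset Strict Implicit. Unset Printing Implicit Defensive.
Import GRing.Theory.
Local Open Scope ring_scope.

Definition geom_equiv (K : fieldType) (P Q : 'M[K]_2) : Prop :=
  exists A : 'M[K]_2, A \in unitmx /\ P = (\det A)^-1 *: (A^T *m Q *m A).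

(* Main.v *)
Require Import Defs.
From HB Require Import structures.
From mathcomp Require Import all_boot all_order all_algebra.
Import GRing.Theory.
Local Open Scope ring_scope.
Set Implicit Arguments. Unset Strict Implicit.
From mathcomp Require Import ring.

Section S.
Variable K : fieldType.
Definition mk (a b c d : K) : 'M[K]_2 :=
  \matrix_(i<2,j<2) if (i:nat)==0%N then (if (j:nat)==0%N then a else b)
                    else (if (j:nat)==0%N then c else d).

Lemma mkE (A : 'M[K]_2) : A = mk (A 0 0) (A 0 1) (A 1 0) (A 1 1).
Proof.
apply/matrixP => i j; rewrite !mxE.
case: i => [[|[|//]] Hi]; case: j => [[|[|//]] Hj] /=;
 congr (A _ _); exact: val_inj.
Qed.

Lemma det_mk a b c d : \det (mk a b c d) = a * d - b * c.
Proof.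
rewrite (expand_det_row _ 0) !big_ord_recl big_ord0 /cofactor !det_mx11 !mxE /=.
rewrite !expr0 expr1; ring.
Qed.

Lemma mul_mk a b c d a' b' c' d' : mk a b c d *m mk a' b' c' d' =
  mk (a*a'+b*c') (a*b'+b*d') (c*a'+d*c') (c*b'+d*d').
Proof. apply/matrixP => i j; rewrite !mxE !big_ord_recl big_ord0 !mxE /=.
case: i => [[|[|//]] Hi]; case: j => [[|[|//]] Hj] /=; ring. Qed.

Lemma tr_mk a b c d : (mk a b c d)^T = mk a c b d.
Proof. apply/matrixP => i j; rewrite !mxE /=.
case: i => [[|[|//]] Hi]; case: j => [[|[|//]] Hj] //=. Qed.

Lemma scale_mk k a b c d : k *: mk a b c d = mk (k*a) (k*b) (k*c) (k*d).
Proof. apply/matrixP => i j; rewrite !mxE /=.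
case: i => [[|[|//]] Hi]; case: j => [[|[|//]] Hj] //=. Qed.

Lemma mk_eq a b c d a' b' c' d' : a = a' -> b = b' -> c = c' -> d = d' ->
  mk a b c d = mk a' b' c' d'.
Proof. by move=> -> -> -> ->. Qed.

Lemma mk0 a b c d : (mk a b c d == 0) = [&& a == 0, b == 0, c == 0 & d == 0].
Proof.
apply/eqP/idP.
- move/matrixP => H. have := H 0 0; have := H 0 1; have := H 1 0; have := H 1 1.
  rewrite !mxE /= => -> -> -> ->; by rewrite eqxx.
- case/and4P => /eqP-> /eqP-> /eqP-> /eqP->; apply/matrixP => i j; rewrite !mxE.
  by case: ifP; case: ifP.
Qed.
End S.

Lemma canon (K : fieldType) (h2 : (1 + 1 : K) != 0) (a b c : K) :
  mk a b b c != 0 -> geom_equiv (mk (-1) 0 0 (-(a*c - b*b))) (mk a b b c).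
Proof.
move=> hnz.
have wit : forall C : 'M[K]_2, \det C != 0 ->
   mk (-1) 0 0 (-(a*c - b*b)) = (\det C)^-1 *: (C^T *m mk a b b c *m C) ->
   geom_equiv (mk (-1) 0 0 (-(a*c - b*b))) (mk a b b c).
  by move=> C hC E; exists C; rewrite unitmxE unitfE.
have [ha|ha] := eqVneq a 0; last first.
  apply: (wit (mk 1 b 0 (-a))); rewrite det_mk; first by rewrite mulr0 subr0 mul1r oppr_eq0.
  rewrite tr_mk !mul_mk scale_mk; apply: mk_eq; field; rewrite oppr_eq0 //.
have [hc|hc] := eqVneq c 0; last first.
  apply: (wit (mk 0 c 1 (-b))); rewrite det_mk; first by rewrite mul0r mulr1 sub0r oppr_eq0.
  rewrite tr_mk !mul_mk scale_mk; apply: mk_eq; field; rewrite oppr_eq0 //.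
have hb : b != 0.
  by apply: contra hnz => /eqP hb; rewrite mk0 ha hb hc eqxx.
subst a c.
apply: (wit (mk 1 b 1 (-b))); rewrite det_mk.
  by rewrite mul1r mulr1 -opprD oppr_eq0 -{1 2}[b]mul1r -mulrDl mulf_neq0.
have h2b : (1 + 1) * b != 0 by rewrite mulf_neq0.
rewrite tr_mk !mul_mk scale_mk; apply: mk_eq; field.
all: by rewrite -opprD oppr_eq0 -{1 2}[b]mul1r -mulrDl.
Qed.

Lemma ge_inv (K : fieldType) (S P : 'M[K]_2) (A : 'M[K]_2) :
  A \in unitmx -> S = (\det A)^-1 *: (A^T *m P *m A) ->
  P = \det A *: ((invmx A)^T *m S *m invmx A).
Proof.
move=> uA ->.
have dA : \det A != 0 by rewrite -unitfE -unitmxE.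
rewrite -scalemxAr -scalemxAl scalerA mulfV // scale1r.
by rewrite !mulmxA -trmx_mul mulmxV // trmx1 mul1mx -mulmxA mulmxV // mulmx1.
Qed.

Lemma ge_trans (K : fieldType) (S P Q : 'M[K]_2) :
  geom_equiv S P -> geom_equiv S Q -> geom_equiv P Q.
Proof.
move=> [A [uA hA]] [B [uB hB]].
have dA : \det A != 0 by rewrite -unitfE -unitmxE.
have dB : \det B != 0 by rewrite -unitfE -unitmxE.
exists (B *m invmx A); split; first by rewrite unitmx_mul uB unitmx_inv.
rewrite (ge_inv uA hA) hB det_mulmx det_inv trmx_mul.
rewrite -?scalemxAl -?scalemxAr -?scalemxAl !scalerA !mulmxA.
congr (_ *: _); by rewrite invfM invrK mulrC.
Qed.

Unset Implicit Arguments.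
Theorem theorem5p12 (K : fieldType) (h2 : (1 + 1 : K) != 0)
  (P Q : 'M[K]_2) (hPs : P^T = P) (hQs : Q^T = Q)
  (hP0 : P != 0) (hQ0 : Q != 0) (hdet : \det P = \det Q) :
  geom_equiv P Q.
Proof.
have sym : forall X : 'M[K]_2, X^T = X -> X = mk (X 0 0) (X 0 1) (X 0 1) (X 1 1).
  move=> X hX; rewrite {1}(mkE X); congr mk.
  by rewrite -{1}hX mxE.
have eP := sym P hPs; have eQ := sym Q hQs.
apply: (@ge_trans _ (mk (-1) 0 0 (- \det P))).
  rewrite eP det_mk; apply: canon => //; by rewrite -eP.
rewrite hdet eQ det_mk; apply: canon => //; by rewrite -eQ.
Qed.
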